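(* Let $G$ be a finite digraph without sources, and suppose its vertices can be ordered as $v_1,\dots,v_n$ so that for all $i<j$, if $v_jv_i\in E(G)$ then also $v_iv_j\in E(G)$. Then $G$ has a quasi-kernel with at most $n/2$ vertices.
   Context: Digraphs are finite, without loops and without multiple edges in the same direction; anti-parallel edges are allowed. An edge $uv$ goes from $u$ to $v$. For $V'\subseteq V(G)$, $\Gamma^+(V')$ is the set of out-neighbours of vertices of $V'$, $\Gamma^+_1(V')=V'\cup\Gamma^+(V')$ and $\Gamma^+_2(V')=V'\cup\Gamma^+(V')\cup\Gamma^+(\Gamma^+(V'))$. A source is a vertex of in-degree $0$. A quasi-kernel of $G$ is an independent set $Q\subseteq V(G)$ with $\Gamma^+_2(Q)=V(G)$. *)

(* Defs.v *)
From mathcomp Require Import all_boot.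
Set Implicit Arguments. Unset Strict Implicit. Unset Printing Implicit Defensive.

(* A finite digraph on vertex set T: edge relation e (e u v means uv is an edge,
   from u to v). Multiple edges are impossible since
   e is a relation; anti-parallel edges are allowed. *)
Definition loopless (T : finType) (e : rel T) : Prop := forall v, ~~ e v v.

Definition outN (T : finType) (e : rel T) (A : {set T}) : {set T} :=
  [set v | [exists u in A, e u v]].

Definition Gamma1 (T : finType) (e : rel T) (A : {set T}) : {set T} :=
  A :|: outN e A.

Definition Gamma2 (T : finType) (e : rel T) (A : {set T}) : {set T} :=
  A :|: outN e A :|: outN e (outN e A).

Definition independent (T : finType) (e : rel T) (A : {set T}) : Prop :=
  forall u v, u \in A -> v \in A -> ~~ e u v.

Definition quasi_kernel (T : finType) (e : rel T) (Q : {set T}) : Prop :=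
  independent e Q /\ Gamma2 e Q = [set: T].

Definition is_source (T : finType) (e : rel T) (v : T) : Prop :=
  forall u, ~~ e u v.

(* Main.v *)
Require Import Defs.
From mathcomp Require Import all_boot.

Section K.
Variables (T : finType) (e : rel T) (n : nat) (f : T -> 'I_n).
Hypothesis hl : loopless e.
Hypothesis finj : injective f.
Hypothesis hs : forall u v : T, f u < f v -> e v u -> e u v.

Lemma kern_in (S : {set T}) : exists M : {set T},
  [/\ M \subset S, independent e M &
      forall w, w \in S -> w \in M \/ exists2 q, q \in M & e q w].
Proof.
move: {2}#|S| (leqnn #|S|) => k; elim: k S => [|k IH] S hS.
  exists set0; split; [exact: sub0set| by move=> u v; rewrite inE|].
  move=> w wS; move: hS; rewrite leqn0 => /eqP/cards0_eq S0.
  by rewrite S0 inE in wS.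
case: (set_0Vmem S) => [S0|[x0 x0S]].
  exists set0; split; [exact: sub0set| by move=> u v; rewrite inE|].
  by move=> w; rewrite S0 inE.
case: (arg_minnP (fun x => nat_of_ord (f x)) x0S) => m mS mmin.
pose S' := [set w in S | [&& w != m, ~~ e m w & ~~ e w m]].
have sub : S' \proper S.
  apply/properP; split; last by exists m => //; rewrite inE eqxx andbF.
  by apply/subsetP => w; rewrite inE => /andP[].
have := proper_card sub => hc.
have [M' [M'S' iM' dM']] := IH S' ltac:(by rewrite -ltnS (leq_trans hc hS)).
exists (m |: M'); split.
- apply/subsetP => w; rewrite !inE => /orP[/eqP->//|wM].
  by have := subsetP M'S' w wM; rewrite inE => /andP[].
- move=> u v; rewrite !inE => /orP[/eqP->|uM] /orP[/eqP->|vM].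
  + exact: hl.
  + by have := subsetP M'S' v vM; rewrite inE => /and4P[].
  + by have := subsetP M'S' u uM; rewrite inE => /and4P[].
  + exact: iM'.
- move=> w wS.
  case wS': (w \in S').
    case: (dM' w wS') => [h|[q qM eq]]; first by left; rewrite !inE h orbT.
    by right; exists q => //; rewrite !inE qM orbT.
  move: wS'; rewrite inE wS /= => /negbT.
  case: (w =P m) => [->|wm] /=; first by left; rewrite !inE eqxx.
  case emw: (e m w) => /=.
    by move=> _; right; exists m => //; rewrite !inE eqxx.
  rewrite negbK => ewm.
  right; exists m; first by rewrite !inE eqxx.
  apply: hs ewm.
  rewrite ltn_neqAle mmin // andbT.
  apply/negP => /eqP fe.
  by apply: wm; apply: finj; rewrite (val_inj fe).
Qed.
End K.

Theorem mainTheorem1 (T : finType) (e : rel T) :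
  loopless e ->
  (forall v : T, ~ is_source e v) ->
  (exists f : T -> 'I_#|T|, bijective f /\
     forall u v : T, f u < f v -> e v u -> e u v) ->
  exists Q : {set T}, quasi_kernel e Q /\ (2 * #|Q| <= #|T|)%N.
Proof.
move=> hl hns [f [fb hs]].
have finj := bij_inj fb.
have [Q1 [_ i1 d1]] := @kern_in T e _ f hl finj hs [set: T].
have [Q2 [s2 i2 d2]] := @kern_in T e _ f hl finj hs (~: Q1).
have qk1 : quasi_kernel e Q1.
  split => //; apply/setP => w; rewrite !inE.
  case: (d1 w (in_setT w)) => [->//|[q qQ eq]].
  apply/orP; left; apply/orP; right; apply/existsP; exists q; by rewrite qQ.
have qk2 : quasi_kernel e Q2.
  split => //; apply/setP => w; rewrite !inE.
  case wQ1: (w \in Q1).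
    have [x ex] : exists x, e x w.
      case: (boolP [exists x, e x w]) => [/existsP[x ex]|/existsPn H].
        by exists x.
      by exfalso; apply: (hns w) => u; exact: H u.
    have xQ1 : x \in ~: Q1.
      by rewrite inE; apply/negP => xQ; have := i1 _ _ xQ wQ1; rewrite ex.
    case: (d2 x xQ1) => [xQ2|[q qQ eq]].
      apply/orP; left; apply/orP; right; apply/existsP; exists x; by rewrite xQ2.
    apply/orP; right; apply/existsP; exists x; rewrite ex andbT inE.
    apply/existsP; exists q; by rewrite qQ.
  have : w \in ~: Q1 by rewrite inE wQ1.
  move=> /d2 [->//|[q qQ eq]].
  apply/orP; left; apply/orP; right; apply/existsP; exists q; by rewrite qQ.
have hc : #|Q1| + #|Q2| <= #|T|.
  rewrite -(cardsC Q1) leq_add2l; exact: subset_leq_card s2.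
case: (leqP #|Q1| #|Q2|) => h.
  exists Q1; split => //; rewrite mul2n -addnn (leq_trans _ hc) // leq_add2l //.
exists Q2; split => //; rewrite mul2n -addnn (leq_trans _ hc) // leq_add2r ltnW //.
Qed.
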